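(* Let $A\in\mathbf{R}^{I\times H}$ with columns $a_1,\dots,a_H$, and let $\mathcal{C}=\{A\nu:\nu\in\mathbf{R}^H,\ \nu\ge 0\}$. Let $B\in\mathbf{R}^{m\times I}$ be such that $\mathcal{C}=\{t\in\mathbf{R}^I: Bt\le 0\}$, with rows $b_1',\dots,b_m'$ ordered as $B=\begin{bmatrix}B^{\le}\\ B^{=}\end{bmatrix}$, where $B^{\le}\in\mathbf{R}^{\bar m\times I}$ consists of the rows corresponding to inequality constraints (rows $b_k$ for which $b_k'a_h\neq 0$ for some $h$) and $B^{=}\in\mathbf{R}^{(m-\bar m)\times I}$ consists of the rows corresponding to equality constraints (rows $b_k$ with $b_k't=0$ for all $t\in\mathcal{C}$). For $\tau>0$ define $\mathcal{C}_\tau=\{A\nu:\nu\ge(\tau/H)\mathbf{1}_H\}$, where $\mathbf{1}_H$ is the $H$-vector of ones. Then $$\mathcal{C}_\tau=\{t\in\mathbf{R}^I: Bt\le-\tau\phi\}$$ for some $\phi=(\phi_1,\dots,\phi_m)'$ in the column space of $B$ with the properties that (i) $(\phi_1,\dots,\phi_{\bar m})'\in\mathbf{R}^{\bar m}_{++}$, and (ii) $\phi_k=0$ for all $k>\bar m$.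
   Context: Vector inequalities are componentwise; $\mathbf{R}^{\bar m}_{++}$ denotes vectors with all entries strictly positive. *)

(* Defs.v *)
From HB Require Import structures.
From mathcomp Require Import all_boot all_order all_algebra.
Set Implicit Arguments. Unset Strict Implicit. Unset Printing Implicit Defensive.
Import Order.TTheory GRing.Theory Num.Theory.
Local Open Scope ring_scope.

Definition cone_of (R : realFieldType) (I H : nat) (A : 'M[R]_(I, H))
  (t : 'cV[R]_I) : Prop :=
  exists nu : 'cV[R]_H, (forall h : 'I_H, 0 <= nu h 0) /\ t = A *m nu.

Definition cone_tau (R : realFieldType) (I H : nat) (A : 'M[R]_(I, H))
  (tau : R) (t : 'cV[R]_I) : Prop :=
  exists nu : 'cV[R]_H, (forall h : 'I_H, tau / H%:R <= nu h 0) /\ t = A *m nu.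

(* Main.v *)
Require Import Defs.
From HB Require Import structures.
From mathcomp Require Import all_boot all_order all_algebra.
Import Order.TTheory GRing.Theory Num.Theory.
Local Open Scope ring_scope.

Theorem lemma1 (R : realFieldType) (I H m mbar : nat)
  (A : 'M[R]_(I, H)) (B : 'M[R]_(m, I))
  (hmbar : (mbar <= m)%N)
  (hB : forall t : 'cV[R]_I,
          cone_of A t <-> (forall k : 'I_m, (B *m t) k 0 <= 0))
  (hineq : forall k : 'I_m, (k < mbar)%N ->
          exists h : 'I_H, (row k B *m col h A) 0 0 != 0)
  (heq : forall k : 'I_m, (mbar <= k)%N ->
          forall t : 'cV[R]_I, cone_of A t -> (B *m t) k 0 = 0)
  (tau : R) (htau : 0 < tau) :
  exists phi : 'cV[R]_m,
    (exists x : 'cV[R]_I, phi = B *m x) /\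
    (forall k : 'I_m, (k < mbar)%N -> 0 < phi k 0) /\
    (forall k : 'I_m, (mbar <= k)%N -> phi k 0 = 0) /\
    (forall t : 'cV[R]_I,
       cone_tau A tau t <-> (forall k : 'I_m, (B *m t) k 0 <= - tau * phi k 0)).
Proof.
set d := tau / H%:R.
set one : 'cV[R]_H := const_mx d.
set c := A *m one.
have tau0 : tau != 0 by rewrite gt_eqF.
exists (B *m (- tau^-1 *: c)).
have Ephi : forall k, (B *m (- tau^-1 *: c)) k 0 = - tau^-1 * (B *m c) k 0.
  by move=> k; rewrite -scalemxAr mxE.
have colC : forall h, cone_of A (col h A).
  move=> h; exists (delta_mx h 0); split; last by rewrite colE.
  by move=> l; rewrite mxE; case: (_ && _).
have Ey : forall k h, (B *m col h A) k 0 = (B *m A) k h.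
  by move=> k h; rewrite colE mulmxA -colE mxE.
have Ec : forall k, (B *m c) k 0 = \sum_h (B *m col h A) k 0 * d.
  move=> k; rewrite /c mulmxA mxE. apply: eq_bigr => h _.
  by rewrite Ey /one !mxE.
split; first by exists (- tau^-1 *: c).
split.
  move=> k hk; rewrite Ephi Ec.
  have [h0 Hh0] := hineq k hk.
  have Hpos : 0 < d.
    by rewrite /d divr_gt0 // ltr0n (leq_ltn_trans (leq0n h0) (ltn_ord h0)).
  have yle : forall h, (B *m col h A) k 0 <= 0 by move=> h; apply/(proj1 (hB _)).
  have y0 : (B *m col h0 A) k 0 < 0.
    rewrite lt_neqAle yle andbT; move: Hh0; by rewrite -row_mul mxE.
  rewrite (bigD1 h0) //= mulNr oppr_gt0 pmulr_rlt0 ?invr_gt0 //.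
  have h1 : (B *m col h0 A) k 0 * d < 0 by rewrite pmulr_llt0.
  have h2 : \sum_(i < H | i != h0) (B *m col i A) k 0 * d <= 0.
    by apply: sumr_le0 => i _; rewrite pmulr_lle0 // yle.
  by have := ltr_leD h1 h2; rewrite addr0.
split.
  move=> k hk; rewrite Ephi Ec big1 ?mulr0 // => h _.
  by rewrite (heq k hk _ (colC h)) mul0r.
have Ekey : forall t, cone_tau A tau t <-> cone_of A (t - c).
  move=> t; split.
    move=> [nu [Hnu ->]]; exists (nu - one); split.
      by move=> h; rewrite !mxE subr_ge0.
    by rewrite mulmxBr.
  move=> [nu [Hnu Ht]]; exists (nu + one); split.
    by move=> h; rewrite !mxE lerDr.
  by rewrite mulmxDr -Ht subrK.
have Esub : forall (t : 'cV[R]_I) k, (B *m (t - c)) k 0 = (B *m t) k 0 - (B *m c) k 0.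
  by move=> t' k; rewrite !mxE -sumrB; apply: eq_bigr => j _; rewrite !mxE mulrBr.
have Etp : forall k, - tau * (B *m (- tau^-1 *: c)) k 0 = (B *m c) k 0.
  by move=> k; rewrite Ephi mulrA mulrNN mulfV // mul1r.
move=> t; apply: (iff_trans (Ekey t)); apply: (iff_trans (hB _)).
split => H1 k; move: (H1 k).
  by rewrite Esub Etp subr_le0.
by rewrite Esub Etp subr_le0.
Qed.
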